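(* Let $\pi$ be a projective unitary representation of a countable group $G$ on a Hilbert space $H$ such that the set $\mathcal{B}_\pi$ of Bessel vectors of $\pi$ is dense in $H$ and $\pi$ admits a Riesz sequence vector. Suppose $\xi\in H$ is such that $\mathrm{range}(\Theta_{\xi,\pi})$ is not dense in $\ell^2(G)$. Then there exists a nonzero vector $x\in H$ such that $\mathrm{range}(\Theta_{x,\pi})$ and $\mathrm{range}(\Theta_{\xi,\pi})$ are orthogonal.
   Context: A projective unitary representation of $G$ on $H$ is a map $g\mapsto\pi(g)$ into unitaries with $\pi(g)\pi(h)=\mu(g,h)\pi(gh)$, $\mu:G\times G\to\mathbb{T}$. $\xi$ is a Bessel vector (resp. Riesz sequence vector) for $\pi$ if $\{\pi(g)\xi\}_{g\in G}$ is a Bessel sequence (resp. a Riesz basis for its closed span). The analysis operator $\Theta_{x,\pi}(y)=\sum_{g\in G}\langle y,\pi(g)x\rangle\chi_g$ ($\{\chi_g\}$ the standard basis of $\ell^2(G)$) is defined on $\{y\in H:\sum_g|\langle y,\pi(g)x\rangle|^2<\infty\}$. *)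

(* Defs.v *)
From HB Require Import structures.
From mathcomp Require Import all_boot all_order all_algebra.
From mathcomp Require Import classical_sets boolp reals constructive_ereal ereal esum.
From mathcomp Require Import complex.
Set Implicit Arguments. Unset Strict Implicit. Unset Printing Implicit Defensive.
Import Order.TTheory GRing.Theory Num.Theory.
Local Open Scope classical_set_scope.
Local Open Scope ring_scope.

Section Defs.
Variable R : realType.
Local Notation C := (R[i]).

Definition sqmod (z : C) : R := complex.Re (`|z| ^+ 2).

Section Hilbert.
Variable H : lmodType C.

Definition is_inner_product (ip : H -> H -> C) : Prop :=
  [/\ (forall (a : C) (x y z : H), ip (a *: x + y) z = a * ip x z + ip y z),
      (forall x y : H, ip y x = (ip x y)^*),
      (forall x : H, 0 <= ip x x) &
      (forall x : H, ip x x = 0 -> x = 0)].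

Definition hnorm2 (ip : H -> H -> C) (x : H) : R := complex.Re (ip x x).

Definition ip_complete (ip : H -> H -> C) : Prop :=
  forall u : nat -> H,
    (forall e : R, 0 < e -> exists N : nat, forall m n : nat,
        (N <= m)%N -> (N <= n)%N -> hnorm2 ip (u m - u n) < e) ->
    exists l : H, forall e : R, 0 < e -> exists N : nat, forall n : nat,
        (N <= n)%N -> hnorm2 ip (u n - l) < e.

Definition is_hilbert (ip : H -> H -> C) : Prop :=
  is_inner_product ip /\ ip_complete ip.

Definition unitary (ip : H -> H -> C) (U : H -> H) : Prop :=
  [/\ (forall (a : C) (x y : H), U (a *: x + y) = a *: U x + U y),
      (forall x y : H, ip (U x) (U y) = ip x y) &
      (forall y : H, exists x : H, U x = y)].

Variable G : groupType.

Definition proj_unitary_rep (ip : H -> H -> C) (pi : G -> H -> H) : Prop :=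
  (forall g : G, unitary ip (pi g)) /\
  exists mu : G -> G -> C,
    (forall g h : G, `|mu g h| = 1) /\
    (forall (g h : G) (x : H), pi g (pi h x) = mu g h *: pi (g * h)%g x).

Definition bessel_vector (ip : H -> H -> C) (pi : G -> H -> H) (xi : H) : Prop :=
  exists B : R, forall y : H,
    (\esum_(g in [set: G]) (sqmod (ip y (pi g xi)))%:E <= (B * hnorm2 ip y)%:E)%E.

(* Riesz sequence vector: {pi g xi}_g is a Riesz sequence, i.e. a Riesz basis
   of its closed linear span (Riesz bounds A, B on finitely supported
   coefficient families) *)
Definition riesz_vector (ip : H -> H -> C) (pi : G -> H -> H) (xi : H) : Prop :=
  exists A B : R, 0 < A /\ 0 < B /\
    forall (s : seq G) (c : G -> C), uniq s ->
      A * \sum_(g <- s) sqmod (c g)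
        <= hnorm2 ip (\sum_(g <- s) c g *: pi g xi)
        <= B * \sum_(g <- s) sqmod (c g).

Definition bessel_dense (ip : H -> H -> C) (pi : G -> H -> H) : Prop :=
  forall (x : H) (e : R), 0 < e ->
    exists2 y : H, bessel_vector ip pi y & hnorm2 ip (x - y) < e.

Definition theta_dom (ip : H -> H -> C) (pi : G -> H -> H) (x y : H) : Prop :=
  (\esum_(g in [set: G]) (sqmod (ip y (pi g x)))%:E < +oo)%E.

Definition theta (ip : H -> H -> C) (pi : G -> H -> H) (x y : H) : G -> C :=
  fun g => ip y (pi g x).

Definition theta_range (ip : H -> H -> C) (pi : G -> H -> H) (x : H)
  : set (G -> C) :=
  [set a | exists2 y, theta_dom ip pi x y & a = theta ip pi x y].

End Hilbert.

Section L2.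
Variable G : choiceType.

Definition countable_type : Prop := exists f : G -> nat, injective f.

Definition in_l2 (a : G -> C) : Prop :=
  (\esum_(g in [set: G]) (sqmod (a g))%:E < +oo)%E.

Definition l2_dist2 (a b : G -> C) : \bar R :=
  \esum_(g in [set: G]) (sqmod (a g - b g))%:E.

Definition dense_in_l2 (S : set (G -> C)) : Prop :=
  forall b : G -> C, in_l2 b -> forall e : R, 0 < e ->
    exists2 a, S a & (l2_dist2 a b < e%:E)%E.

Definition has_usum (f : G -> C) (s : C) : Prop :=
  forall e : R, 0 < e -> exists s0 : seq G, forall t : seq G,
    uniq t -> {subset s0 <= t} -> complex.Re `|\sum_(g <- t) f g - s| < e.

Definition l2_ip_is (a b : G -> C) (s : C) : Prop :=
  has_usum (fun g => a g * (b g)^*) s.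

Definition l2_orthogonal (S T : set (G -> C)) : Prop :=
  forall a b, S a -> T b -> l2_ip_is a b 0.
End L2.
End Defs.

(* Main.v *)
Require Import Defs.
From HB Require Import structures.
From mathcomp Require Import all_boot all_order all_algebra.
From mathcomp Require Import classical_sets boolp reals constructive_ereal ereal esum.
From mathcomp Require Import complex.
From mathcomp Require Import finmap fsbigop cardinality.
From mathcomp Require Import ring lra.
Set Implicit Arguments. Unset Strict Implicit. Unset Printing Implicit Defensive.
Import Order.TTheory GRing.Theory Num.Theory.
Local Open Scope classical_set_scope.
Local Open Scope ring_scope.


Section IP.
Variable R : realType.
Local Notation C := R[i].

Lemma conjE (z : C) : z^* = conjc z. Proof. reflexivity. Qed.

Lemma sqmodE (a b : R) : sqmod (a +i* b)%C = a^+2 + b^+2.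
Proof. rewrite /sqmod sqr_normc /=; simpc; by rewrite /= !expr2. Qed.

Lemma sqmod_ge0 (z : C) : 0 <= sqmod z.
Proof. case: z => a b; rewrite sqmodE; nra. Qed.

Lemma sqmodN (z : C) : sqmod (- z) = sqmod z.
Proof. case: z => a b; rewrite /= sqmodE sqmodE; nra. Qed.

Lemma sqmod0 : sqmod (0 : C) = 0.
Proof. by rewrite /= sqmodE expr2 mulr0 addr0. Qed.

Lemma sqmod_eq0 (z : C) : sqmod z = 0 -> z = 0.
Proof.
case: z => a b; rewrite sqmodE => h.
have ha : a = 0 by nra.
have hb : b = 0 by nra.
by rewrite ha hb.
Qed.

Lemma normc_lt (z : C) (e : R) : 0 < e -> sqmod z < e ^+ 2 -> complex.Re `|z| < e.
Proof.
case: z => a b he; rewrite sqmodE normc_def /= => h.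
have h0 : 0 <= a ^+ 2 + b ^+ 2 by nra.
rewrite -[X in _ < X](ger0_norm (ltW he)) -sqrtr_sqr ltr_sqrt //.
by rewrite exprn_gt0.
Qed.

Variable H : lmodType C.
Variable ip : H -> H -> C.
Hypothesis ipP : is_inner_product ip.
Local Notation n := (hnorm2 ip).

Lemma ipDZl a x y z : ip (a *: x + y) z = a * ip x z + ip y z.
Proof. by case: ipP. Qed.

Lemma ipC x y : ip y x = (ip x y)^*.
Proof. by case: ipP. Qed.

Lemma ip0l z : ip 0 z = 0.
Proof.
have := ipDZl 1 0 0 z; rewrite scaler0 addr0 mul1r.
by move=> /(congr1 (fun t => t - ip 0 z)) /=; rewrite subrr addrK => <-.
Qed.

Lemma ipDl x y z : ip (x + y) z = ip x z + ip y z.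
Proof. by have := ipDZl 1 x y z; rewrite scale1r mul1r. Qed.

Lemma ipZl a x z : ip (a *: x) z = a * ip x z.
Proof. by rewrite -(addr0 (a *: x)) ipDZl ip0l addr0. Qed.

Lemma ipNl x z : ip (- x) z = - ip x z.
Proof. by rewrite -scaleN1r ipZl mulN1r. Qed.

Lemma ipBl x y z : ip (x - y) z = ip x z - ip y z.
Proof. by rewrite ipDl ipNl. Qed.

Lemma ip0r z : ip z 0 = 0.
Proof. by rewrite ipC ip0l rmorph0. Qed.

Lemma ipDr x y z : ip z (x + y) = ip z x + ip z y.
Proof. by rewrite !(ipC _ z) ipDl rmorphD. Qed.

Lemma ipZr a x z : ip z (a *: x) = a^* * ip z x.
Proof. by rewrite !(ipC _ z) ipZl rmorphM. Qed.

Lemma ipNr x z : ip z (- x) = - ip z x.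
Proof. by rewrite -scaleN1r ipZr rmorphN1 mulN1r. Qed.

Lemma ipBr x y z : ip z (x - y) = ip z x - ip z y.
Proof. by rewrite ipDr ipNr. Qed.

Lemma ip_sumr (I : Type) (s : seq I) (F : I -> H) z :
  ip z (\sum_(i <- s) F i) = \sum_(i <- s) ip z (F i).
Proof.
elim: s => [|a s IH]; first by rewrite !big_nil ip0r.
by rewrite !big_cons ipDr IH.
Qed.

Lemma ipxx x : ip x x = (n x)%:C%C.
Proof.
case: ipP => _ _ h _; move: (h x); rewrite /hnorm2.
case: (ip x x) => a b; rewrite lecE /= => /andP[/eqP hb _].
by subst b.
Qed.

Lemma hn_ge0 x : 0 <= n x.
Proof.
case: ipP => _ _ h _; move: (h x); rewrite /hnorm2.
by case: (ip x x) => a b; rewrite lecE /= => /andP[_].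
Qed.

Lemma hn_eq0 x : n x = 0 -> x = 0.
Proof. by case: ipP => _ _ _ h; move=> e; apply: h; rewrite ipxx e. Qed.

Lemma hn0 : n 0 = 0.
Proof. by rewrite /hnorm2 ip0l. Qed.

Lemma hn_exp x y s : n (x + s *: y) =
  n x + 2 * (complex.Re s * complex.Re (ip x y) + complex.Im s * complex.Im (ip x y))
  + sqmod s * n y.
Proof.
rewrite /hnorm2.
have -> : ip (x + s *: y) (x + s *: y) =
   ip x x + s^* * ip x y + s * (ip x y)^* + s * s^* * ip y y.
  rewrite ipDl !ipDr !ipZl !ipZr (ipC x y); ring.
rewrite !ipxx /=; case: s => a b; case: (ip x y) => c d.
rewrite sqmodE conjE /=; simpc; rewrite /=; ring.
Qed.


Lemma hn_add x y : n (x + y) = n x + 2 * complex.Re (ip x y) + n y.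
Proof.
have := hn_exp x y 1; rewrite scale1r => ->.
have -> : sqmod (1 : R[i]) = 1 by rewrite -[1 : R[i]]/((1 +i* 0)%C) sqmodE; ring.
by rewrite /=; ring.
Qed.

Lemma hn_scale s y : n (s *: y) = sqmod s * n y.
Proof. by have := hn_exp 0 y s; rewrite add0r hn0 ip0l /= => ->; ring. Qed.

Lemma hn_N x : n (- x) = n x.
Proof.
rewrite -scaleN1r hn_scale.
have -> : sqmod (-1 : R[i]) = 1 by rewrite -[-1 : R[i]]/(((-1) +i* (-0))%C) sqmodE; ring.
by rewrite mul1r.
Qed.

Lemma hn_sym x y : n (x - y) = n (y - x).
Proof. by rewrite -hn_N opprB. Qed.

Lemma hn_par x y : n (x + y) + n (x - y) = 2 * n x + 2 * n y.
Proof. by rewrite !hn_add ipNr hn_N raddfN /=; ring. Qed.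

Lemma hn_le2 x y : n (x + y) <= 2 * n x + 2 * n y.
Proof. by have := hn_par x y; have := hn_ge0 (x - y); lra. Qed.

Lemma hn_le2B x y : n (x - y) <= 2 * n x + 2 * n y.
Proof. by have := hn_le2 x (- y); rewrite hn_N. Qed.

Lemma hn_tri x y z : n (x - z) <= 2 * n (x - y) + 2 * n (y - z).
Proof. by have := hn_le2 (x - y) (y - z); rewrite addrA subrK. Qed.

Lemma CS x y : sqmod (ip x y) <= n x * n y.
Proof.
have [ny0|nyp] := eqVneq (n y) 0.
  by rewrite (hn_eq0 ny0) ip0r sqmod0 hn0 mulr0.
have ny_gt0 : 0 < n y by rewrite lt_neqAle eq_sym nyp hn_ge0.
move: (hn_ge0 x); case E: (ip x y) => [c d]; rewrite sqmodE => nx0.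
set k := (n y)^-1.
have hk : n y * k = 1 by rewrite /k divff.
have := hn_ge0 (x + ((- c * k) +i* (- d * k))%C *: y).
rewrite hn_exp E sqmodE /= => h.
have h2 : 0 <= n x - k * (c ^+ 2 + d ^+ 2).
  suff -> : n x - k * (c ^+ 2 + d ^+ 2) = n x + 2 * (- c * k * c + - d * k * d) +
     ((- c * k) ^+ 2 + (- d * k) ^+ 2) * n y by [].
  rewrite -[X in _ = X]/(_ : R); have -> : ((- c * k) ^+ 2 + (- d * k) ^+ 2) * n y
     = k * (c^+2 + d^+2) * (n y * k) by ring.
  rewrite hk; ring.
have := mulr_ge0 (ltW ny_gt0) h2.
rewrite mulrBr mulrA hk mul1r; lra.
Qed.

End IP.



Section Esum.
Variable R : realType.
Variable T : choiceType.
Variable p : T -> R.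
Hypothesis p0 : forall g, 0 <= p g.

Lemma esum_ge_seq (t : seq T) : uniq t ->
  ((\sum_(g <- t) p g)%:E <= \esum_(g in [set: T]) (p g)%:E)%E.
Proof.
move=> ut; apply: esum_ge; exists [set` t].
  by split; [exact: finite_seq|].
by rewrite -fsbig_seq // sumEFin.
Qed.

Lemma esum_le_ub (K : R) :
  (forall t : seq T, uniq t -> \sum_(g <- t) p g <= K) ->
  (\esum_(g in [set: T]) (p g)%:E <= K%:E)%E.
Proof.
move=> h; apply: ge_ereal_sup => _ [X [finX _] <-].
by rewrite fsbig_finite // sumEFin lee_fin h // fset_uniq.
Qed.

Lemma esum_approx (e : R) : 0 < e ->
  (\esum_(g in [set: T]) (p g)%:E < +oo)%E ->
  exists t : seq T, uniq t /\
    (\esum_(g in [set: T]) (p g)%:E < (\sum_(g <- t) p g + e)%:E)%E.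
Proof.
move=> he hfin.
have h0 : (0 <= \esum_(g in [set: T]) (p g)%:E)%E.
  by apply: esum_ge0 => g _; rewrite lee_fin.
set E := esum _ _ in hfin h0 *.
have [r hr] : exists r : R, E = r%:E.
  move: hfin h0; case: E => [r||] //; by exists r.
have : ((r - e)%:E < ereal_sup [set \sum_(x \in A) (p x)%:E | A in fsets [set: T]])%E.
  by rewrite -/(esum _ _) -/E hr lte_fin; lra.
move=> /ereal_sup_gt [_ [X [finX _] <-]].
rewrite fsbig_finite // sumEFin lte_fin => hX.
exists (fset_set X); split; first exact: fset_uniq.
by rewrite hr lte_fin; lra.
Qed.

End Esum.



Section Proj.
Variable R : realType.
Local Notation C := R[i].
Variable H : lmodType C.
Variable ip : H -> H -> C.
Hypothesis ipP : is_inner_product ip.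
Hypothesis ipc : ip_complete ip.
Local Notation n := (hnorm2 ip).

Definition cl (S : set H) (v : H) : Prop :=
  forall e : R, 0 < e -> exists2 w, S w & n (v - w) < e.
Definition orth (S : set H) (q : H) : Prop := forall w, S w -> ip q w = 0.

Lemma archi_inv (e : R) : 0 < e -> exists N : nat, forall k : nat,
  (N <= k)%N -> (k.+1%:R)^-1 < e.
Proof.
move=> he; have h0 : 0 <= e^-1 by rewrite invr_ge0 ltW.
exists (Num.Def.archi_bound e^-1) => k hk.
have h1 := archi_boundP h0.
have h2 : (Num.Def.archi_bound e^-1)%:R <= k.+1%:R :> R.
  by rewrite ler_nat; apply: leqW.
have hk1 : 0 < k.+1%:R :> R by rewrite ltr0n.
rewrite -(ltf_pV2 (x:=e)) ?posrE ?invr_gt0 // invrK.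
apply: lt_le_trans h1 h2.
Qed.

Variable V : set H.
Hypothesis V0 : V 0.
Hypothesis Vlin : forall (a : C) v w, V v -> V w -> V (a *: v + w).

Lemma VD v w : V v -> V w -> V (v + w).
Proof. by move=> hv hw; have := Vlin 1 hv hw; rewrite scale1r. Qed.
Lemma VZ a v : V v -> V (a *: v).
Proof. by move=> hv; have := Vlin a hv V0; rewrite addr0. Qed.

Lemma orth_cl q p : orth V q -> cl V p -> ip q p = 0.
Proof.
move=> hq hp; apply: sqmod_eq0.
have hs0 := sqmod_ge0 (ip q p).
have hq0 := hn_ge0 ipP q.
apply/eqP; rewrite eq_le hs0 andbT; apply/negPn/negP; rewrite -ltNge => hs.
have he : 0 < sqmod (ip q p) / (2 * (n q + 1)).
  by rewrite divr_gt0 //; lra.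
have [w hw hpw] := hp _ he.
have e1 : ip q p = ip q (p - w) by rewrite ipBr // (hq _ hw) subr0.
have := CS ipP q (p - w); rewrite -e1 => hcs.
have : n q * n (p - w) <= n q * (sqmod (ip q p) / (2 * (n q + 1))).
  by apply: ler_wpM2l => //; apply: ltW.
set s := sqmod (ip q p) in hs he hcs *.
have -> : n q * (s / (2 * (n q + 1))) = s * (n q / (2 * (n q + 1))).
  by rewrite mulrCA mulrA.
have : n q / (2 * (n q + 1)) < 1.
  by rewrite ltr_pdivrMr; lra.
move=> h1 h2.
have : s * (n q / (2 * (n q + 1))) < s by rewrite gtr_pMr.
lra.
Qed.

Lemma cl_V v : V v -> cl V v.
Proof. by move=> hv e he; exists v => //; rewrite subrr hn0. Qed.

Lemma cl_lin a v w : cl V v -> cl V w -> cl V (a *: v + w).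
Proof.
move=> hv hw e he.
have ha : 0 < 4 * (sqmod a + 1) by have := sqmod_ge0 a; lra.
have [v' hv' h1] := hv (e / (4 * (sqmod a + 1))) (divr_gt0 he ha).
have [w' hw' h2] := hw (e / 4) (divr_gt0 he (ltr0n _ 4)).
exists (a *: v' + w'); first exact: Vlin.
have -> : a *: v + w - (a *: v' + w') = a *: (v - v') + (w - w').
  by rewrite scalerBr; rewrite opprD addrACA.
apply: le_lt_trans (hn_le2 ipP _ _) _.
rewrite hn_scale //.
have hsa := sqmod_ge0 a.
have hv0 := hn_ge0 ipP (v - v').
have : sqmod a * n (v - v') <= (sqmod a + 1) * (e / (4 * (sqmod a + 1))).
  by apply: ler_pM; lra.
have E1 : (sqmod a + 1) * (e / (4 * (sqmod a + 1))) = e / 4.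
  by field; lra.
move=> h3; lra.
Qed.

Lemma cl_cl v : (forall e, 0 < e -> exists2 w, cl V w & n (v - w) < e) -> cl V v.
Proof.
move=> h e he.
have [w hw h1] := h (e / 4) (divr_gt0 he (ltr0n _ 4)).
have [w' hw' h2] := hw (e / 4) (divr_gt0 he (ltr0n _ 4)).
exists w' => //; apply: le_lt_trans (hn_tri ipP v w w') _; lra.
Qed.

Lemma proj_ex y : exists p, cl V p /\ orth V (y - p).
Proof.
pose D := [set r | exists2 v, V v & r = n (y - v)].
have hD : has_inf D.
  split; first by exists (n (y - 0)), 0.
  by exists 0 => _ [v _ ->]; apply: hn_ge0.
set d := inf D.
have Hd : forall v, V v -> d <= n (y - v).
  by move=> v hv; apply: ge_inf; [case: hD|exists v].
have : forall k : nat, exists v, V v /\ n (y - v) < d + (k.+1%:R)^-1.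
  move=> k; have hk : 0 < (k.+1%:R : R)^-1 by rewrite invr_gt0 ltr0n.
  have [_ [v hv ->] h] := inf_adherent hk hD.
  by exists v.
move=> /choice [vs hvs].
have hvV k : V (vs k) by case: (hvs k).
have hvn k : n (y - vs k) < d + (k.+1%:R)^-1 by case: (hvs k).
have hcauchy : forall k m, n (vs k - vs m) <= 2 * (k.+1%:R)^-1 + 2 * (m.+1%:R)^-1.
  move=> k m.
  pose a := y - vs m; pose b := y - vs k.
  pose w := (2 : C)^-1 *: (vs k + vs m).
  have hw : V w by apply: VZ; apply: VD.
  have e1 : a - b = vs k - vs m.
    by rewrite /a /b opprB [LHS]addrC addrA subrK.
  have h2 : (2:C)^-1 + 2^-1 = 1 by rewrite [RHS](splitr 1) mul1r.
  have e2 : a + b = (y - w) + (y - w).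
    rewrite /a /b /w addrACA [RHS]addrACA; congr (_ + _); rewrite -!opprD.
    by congr (- _); rewrite -scalerDl h2 scale1r addrC.
  have e3 : n ((y - w) + (y - w)) = 4 * n (y - w).
    rewrite hn_add // ipxx //=; ring.
  have := hn_par ipP a b; rewrite e1 e2 e3.
  have := Hd _ hw; have := hvn k; have := hvn m.
  rewrite -/a -/b; clearbody a b w; move: (k.+1%:R^-1) (m.+1%:R^-1) => ik im; lra.
have [p hp] : exists p, forall e, 0 < e -> exists N : nat, forall k, (N <= k)%N ->
    n (vs k - p) < e.
  apply: ipc => e he.
  have [N hN] := archi_inv (divr_gt0 he (ltr0n _ 4)).
  exists N => k m hk hm.
  apply: le_lt_trans (hcauchy k m) _.
  have := hN k hk; have := hN m hm; move: (k.+1%:R^-1) (m.+1%:R^-1) => ik im; lra.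
exists p; split.
  move=> e he; have [N hN] := hp e he; exists (vs N) => //.
  by rewrite hn_sym //; apply: hN.
set u := y - p.
have Hre : forall w, V w -> complex.Re (ip u w) = 0.
  move=> w hw; set r := complex.Re (ip u w).
  have hnw := hn_ge0 ipP w.
  have key : forall t : R, - (2 * t * r) <= t ^+ 2 * n w.
    move=> t; rewrite leNgt; apply/negP => hlt.
    set dl := - (2 * t * r) - t ^+ 2 * n w.
    have hdl : 0 < dl by rewrite /dl; lra.
    have hep : 0 < dl ^+ 2 / (16 * (t ^+ 2 * n w + 1)).
      apply: divr_gt0; first exact: exprn_gt0.
      have : 0 <= t ^+ 2 * n w by apply: mulr_ge0 => //; exact: sqr_ge0.
      lra.
    have [N1 hN1] := hp _ hep.
    have [N2 hN2] := archi_inv (divr_gt0 hdl (ltr0n _ 2)).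
    pose k := maxn N1 N2.
    have h1 := hN1 k (leq_maxl _ _).
    have h2 := hN2 k (leq_maxr _ _).
    have hV : V (vs k + (- t)%:C%C *: w) by apply: VD => //; apply: VZ.
    have h3 := Hd _ hV.
    have ha : y - (vs k + (- t)%:C%C *: w) = (y - vs k) + t%:C%C *: w.
      rewrite opprD addrA; congr (_ + _); rewrite -scaleNr; congr (_ *: _).
      by apply/eqP; rewrite eq_complex /= opprK oppr0 !eqxx.
    rewrite ha hn_exp // /= in h3.
    have hyk : y - vs k = u + (p - vs k) by rewrite /u addrA subrK.
    rewrite hyk ipDl // in h3.
    set q := complex.Re (ip (p - vs k) w) in h3.
    have hq : q ^+ 2 <= n (p - vs k) * n w.
      apply: le_trans (CS ipP _ _); rewrite /q.
      by case: (ip (p - vs k) w) => c0 d0; rewrite sqmodE /=; have := sqr_ge0 d0; lra.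
    have hpk : n (p - vs k) <= dl ^+ 2 / (16 * (t ^+ 2 * n w + 1)).
      by rewrite hn_sym //; apply: ltW.
    have hq2 : (2 * t * q) ^+ 2 <= (dl / 2) ^+ 2.
      have ht2 : 0 <= t ^+ 2 := sqr_ge0 t.
      have : (2 * t * q) ^+ 2 = 4 * t ^+ 2 * q ^+ 2 by ring.
      move=> ->.
      have hpos : 0 < 16 * (t ^+ 2 * n w + 1).
        have : 0 <= t ^+ 2 * n w by apply: mulr_ge0.
        lra.
      have : 4 * t ^+ 2 * q ^+ 2 <= 4 * t ^+ 2 * (n (p - vs k) * n w).
        by apply: ler_wpM2l => //; lra.
      have : n (p - vs k) * n w <= dl ^+ 2 / (16 * (t ^+ 2 * n w + 1)) * n w.
        by apply: ler_wpM2r.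
      have hmul : dl ^+ 2 / (16 * (t ^+ 2 * n w + 1)) * (16 * (t ^+ 2 * n w + 1))
        = dl ^+ 2 by rewrite mulfVK //; apply/eqP; lra.
      set z := dl ^+ 2 / (16 * (t ^+ 2 * n w + 1)) in hmul *.
      have hz : 0 <= z by apply: ltW.
      nra.
    have hq3 : 2 * t * q <= dl / 2.
      have hd2 : 0 < dl / 2 by lra.
      nra.
    have hk := h2; rewrite -/k in hk.
    have hr : complex.Re (ip u w) = r by [].
    have hRe : complex.Re (ip u w + ip (p - vs k) w) = r + q.
      by rewrite /r /q; case: (ip u w) => ? ?; case: (ip (p - vs k) w).
    have hst : sqmod (t%:C%C) = t ^+ 2.
      by rewrite -[t%:C%C]/((t +i* 0)%C) sqmodE; ring.
    move: h3; rewrite hRe hst => h3.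
    have : n (y - vs k) < d + (k.+1%:R)^-1 := hvn k.
    rewrite hyk => h4.
    rewrite /dl in hq3 hdl hk.
    move: hk h4 => hk h4; move: (k.+1%:R^-1) hk h4 => ik hk h4.
    lra.
  set s := r / (n w + 1).
  have t0 := key (- s).
  have hnw1 : 0 < n w + 1 by lra.
  have hrs : r = s * (n w + 1) by rewrite /s mulfVK //; apply/eqP; lra.
  rewrite hrs in t0.
  have hs2 := sqr_ge0 s.
  have : s ^+ 2 * (n w + 2) <= 0 by nra.
  move=> h'.
  have : s ^+ 2 = 0 by nra.
  move/eqP; rewrite sqrf_eq0 => /eqP hs0.
  by rewrite hrs hs0 mul0r.
move=> w hw.
have h1 := Hre w hw.
have h2 := Hre _ (VZ ((0 +i* 1)%C) hw).
rewrite ipZr // in h2.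
move: h1 h2; case: (ip u w) => c0 d0 /= h1 h2.
have hd : d0 = 0 by lra.
by rewrite h1 hd.
Qed.

End Proj.



Lemma big_split_diff (T : eqType) (V : zmodType) (s t : seq T) (F : T -> V) :
  uniq s -> uniq t ->
  \sum_(g <- t) F g - \sum_(g <- s) F g =
  \sum_(g <- [seq g <- t | g \notin s]) F g - \sum_(g <- [seq g <- s | g \notin t]) F g.
Proof.
move=> us ut.
rewrite [\sum_(g <- t) F g](bigID (fun g => g \in s)) /=.
rewrite [\sum_(g <- s) F g](bigID (fun g => g \in t)) /=.
rewrite !big_filter.
have -> : \sum_(i <- t | i \in s) F i = \sum_(i <- s | i \in t) F i.
  rewrite -[LHS]big_filter -[RHS]big_filter.
  apply: perm_big; apply: uniq_perm; rewrite ?filter_uniq //.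
  by move=> x; rewrite !mem_filter andbC.
by rewrite opprD addrACA subrr add0r.
Qed.

Lemma big_cat_filter (T : eqType) (V : zmodType) (s t : seq T) (F : T -> V) :
  \sum_(g <- s ++ [seq g <- t | g \notin s]) F g =
  \sum_(g <- s) F g + \sum_(g <- [seq g <- t | g \notin s]) F g.
Proof. by rewrite big_cat. Qed.

Lemma uniq_cat_filter (T : eqType) (s t : seq T) : uniq s -> uniq t ->
  uniq (s ++ [seq g <- t | g \notin s]).
Proof.
move=> us ut; rewrite cat_uniq us filter_uniq // andbT /=.
by apply/hasPn => x; rewrite mem_filter => /andP[].
Qed.

Lemma filter_nil_sub (T : eqType) (s t : seq T) : {subset s <= t} ->
  [seq g <- s | g \notin t] = [::].
Proof.
move=> h; apply/eqP; rewrite -(negbK (_ == _)) -has_filter; apply/hasPn => x hx.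
by rewrite (h _ hx).
Qed.

Section Rep.
Variable R : realType.
Local Notation C := R[i].
Variable H : lmodType C.
Variable ip : H -> H -> C.
Hypothesis ipP : is_inner_product ip.
Hypothesis ipc : ip_complete ip.
Local Notation n := (hnorm2 ip).
Variable G : groupType.
Variable pi : G -> H -> H.
Hypothesis piU : forall g, unitary ip (pi g).
Variable mu : G -> G -> C.
Hypothesis mu1 : forall g h, `|mu g h| = 1.
Hypothesis muP : forall g h x, pi g (pi h x) = mu g h *: pi (g * h)%g x.
Variables (eta : H) (A B : R).
Hypothesis hA : 0 < A.
Hypothesis hB : 0 < B.
Hypothesis rz : forall (s : seq G) (c : G -> C), uniq s ->
      A * \sum_(g <- s) sqmod (c g)
        <= hnorm2 ip (\sum_(g <- s) c g *: pi g eta)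
        <= B * \sum_(g <- s) sqmod (c g).

Lemma pi_lin g a x y : pi g (a *: x + y) = a *: pi g x + pi g y.
Proof. by case: (piU g). Qed.
Lemma pi_ip g x y : ip (pi g x) (pi g y) = ip x y.
Proof. by case: (piU g). Qed.
Lemma pi_surj g y : exists x, pi g x = y.
Proof. by case: (piU g). Qed.
Lemma pi_n g x : n (pi g x) = n x.
Proof. by rewrite /hnorm2 pi_ip. Qed.
Lemma pi0 g : pi g 0 = 0.
Proof.
have := pi_lin g 1 0 0; rewrite scaler0 addr0 scale1r.
by move=> /(congr1 (fun t => t - pi g 0)) /=; rewrite subrr addrK => <-.
Qed.
Lemma piD g x y : pi g (x + y) = pi g x + pi g y.
Proof. by have := pi_lin g 1 x y; rewrite !scale1r. Qed.
Lemma piZ g a x : pi g (a *: x) = a *: pi g x.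
Proof. by have := pi_lin g a x 0; rewrite !addr0 pi0 addr0. Qed.
Lemma piN g x : pi g (- x) = - pi g x.
Proof. by rewrite -scaleN1r piZ scaleN1r. Qed.
Lemma piB g x y : pi g (x - y) = pi g x - pi g y.
Proof. by rewrite piD piN. Qed.
Lemma pi_sum g (I : Type) (s : seq I) (F : I -> H) :
  pi g (\sum_(i <- s) F i) = \sum_(i <- s) pi g (F i).
Proof.
elim: s => [|a s IH]; first by rewrite !big_nil pi0.
by rewrite !big_cons piD IH.
Qed.

Lemma mumu g h : (mu g h)^* * mu g h = 1.
Proof. by rewrite -normCKC mu1 expr1n. Qed.

Lemma pi_mul g h x : pi (g * h)%g x = (mu g h)^* *: pi g (pi h x).
Proof. by rewrite muP scalerA mumu scale1r. Qed.

Definition SS (t : seq G) (c : G -> C) : H := \sum_(g <- t) c g *: pi g eta.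

Definition hasH (c : G -> C) (v : H) : Prop :=
  forall e : R, 0 < e -> exists s0 : seq G, forall t : seq G,
    uniq t -> {subset s0 <= t} -> n (SS t c - v) < e.

Lemma uniq_sup (s0 s1 : seq G) :
  exists t, [/\ uniq t, {subset s0 <= t} & {subset s1 <= t}].
Proof.
exists (undup (s0 ++ s1)); split; first exact: undup_uniq.
  by move=> x hx; rewrite mem_undup mem_cat hx.
by move=> x hx; rewrite mem_undup mem_cat hx orbT.
Qed.

Lemma SS_lin t a c1 c2 : SS t (fun g => a * c1 g + c2 g) = a *: SS t c1 + SS t c2.
Proof.
rewrite /SS scaler_sumr -big_split /=; apply: eq_bigr => g _.
by rewrite scalerDl scalerA.
Qed.

Lemma SS0 t : SS t (fun _ => 0) = 0.
Proof. by rewrite /SS big1 // => g _; rewrite scale0r. Qed.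

Lemma SS_nil c : SS [::] c = 0.
Proof. by rewrite /SS big_nil. Qed.

Lemma hasH_uniq c v w : hasH c v -> hasH c w -> v = w.
Proof.
move=> hv hw; apply/eqP; rewrite -subr_eq0; apply/eqP; apply: (hn_eq0 ipP).
set x := n (v - w).
have hx := hn_ge0 ipP (v - w).
apply/eqP; rewrite eq_le hx andbT leNgt; apply/negP => hpos.
have [s0 h0] := hv (x / 4) (divr_gt0 hpos (ltr0n _ 4)).
have [s1 h1] := hw (x / 4) (divr_gt0 hpos (ltr0n _ 4)).
have [t [ut h0t h1t]] := uniq_sup s0 s1.
have := h0 t ut h0t; have := h1 t ut h1t.
have := hn_tri ipP v (SS t c) w.
rewrite (hn_sym ipP v (SS t c)); lra.
Qed.

Lemma hasH_lin a c1 c2 v1 v2 : hasH c1 v1 -> hasH c2 v2 ->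
  hasH (fun g => a * c1 g + c2 g) (a *: v1 + v2).
Proof.
move=> h1 h2 e he.
have ha : 0 < 4 * (sqmod a + 1) by have := sqmod_ge0 a; lra.
have [s0 hs0] := h1 (e / (4 * (sqmod a + 1))) (divr_gt0 he ha).
have [s1 hs1] := h2 (e / 4) (divr_gt0 he (ltr0n _ 4)).
have [s [us h0s h1s]] := uniq_sup s0 s1.
exists s => t ut hst.
have k1 := hs0 t ut (fun x hx => hst _ (h0s _ hx)).
have k2 := hs1 t ut (fun x hx => hst _ (h1s _ hx)).
rewrite SS_lin.
have -> : a *: SS t c1 + SS t c2 - (a *: v1 + v2) = a *: (SS t c1 - v1) + (SS t c2 - v2).
  by rewrite scalerBr opprD addrACA.
apply: le_lt_trans (hn_le2 ipP _ _) _.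
rewrite hn_scale //.
have hsa := sqmod_ge0 a.
have hv0 := hn_ge0 ipP (SS t c1 - v1).
have : sqmod a * n (SS t c1 - v1) <= (sqmod a + 1) * (e / (4 * (sqmod a + 1))).
  by apply: ler_pM; lra.
have E1 : (sqmod a + 1) * (e / (4 * (sqmod a + 1))) = e / 4.
  by field; lra.
move=> h3; lra.
Qed.

Lemma hasH0 : hasH (fun _ => 0) 0.
Proof. by move=> e he; exists [::] => t _ _; rewrite SS0 subrr hn0. Qed.

Lemma SS_bound f c : uniq f -> n (SS f c) <= B * \sum_(g <- f) sqmod (c g).
Proof. by move=> uf; case/andP: (rz c uf). Qed.

Lemma mulB_lt (x e : R) : x < e / (4 * B) -> B * x < e / 4.
Proof.
move=> h; have hB0 := hB; have := h; rewrite -(ltr_pM2l hB) => h'.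
have E : B * (e / (4 * B)) = e / 4 by field; lra.
lra.
Qed.

Lemma hasH_ex c : (\esum_(g in [set: G]) (sqmod (c g))%:E < +oo)%E ->
  exists v, hasH c v.
Proof.
move=> hfin.
have p0 : forall g, 0 <= sqmod (c g) by move=> g; apply: sqmod_ge0.
have h0 : (0 <= \esum_(g in [set: G]) (sqmod (c g))%:E)%E.
  by apply: esum_ge0 => g _; rewrite lee_fin.
have [r hr] : exists r : R, \esum_(g in [set: G]) (sqmod (c g))%:E = r%:E.
  by move: hfin h0; case: (esum _ _) => [r'||] //; exists r'.
have hle : forall t, uniq t -> \sum_(g <- t) sqmod (c g) <= r.
  by move=> t ut; have := esum_ge_seq (fun g => sqmod (c g)) ut; rewrite hr lee_fin.
have : forall k : nat, exists t, uniq t /\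
    r < \sum_(g <- t) sqmod (c g) + (k.+1%:R)^-1.
  move=> k; have hk : 0 < (k.+1%:R : R)^-1 by rewrite invr_gt0 ltr0n.
  have [t [ut ht]] := esum_approx p0 hk hfin.
  by exists t; split => //; move: ht; rewrite hr lte_fin.
move=> /choice [ts hts].
have uts k : uniq (ts k) by case: (hts k).
have hts' k : r - \sum_(g <- ts k) sqmod (c g) <= (k.+1%:R)^-1.
  by case: (hts k) => _; move: (k.+1%:R^-1) => ik h; apply: ltW; lra.
have tail : forall s t, uniq s -> uniq t ->
    n (SS [seq g <- t | g \notin s] c) <= B * (r - \sum_(g <- s) sqmod (c g)).
  move=> s t us ut; apply: le_trans (SS_bound _ (filter_uniq _ ut)) _.
  apply: ler_wpM2l; first exact: ltW.
  have := hle _ (uniq_cat_filter us ut); rewrite big_cat_filter; lra.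
have diff : forall s t, uniq s -> uniq t ->
    SS t c - SS s c = SS [seq g <- t | g \notin s] c - SS [seq g <- s | g \notin t] c.
  by move=> s t us ut; rewrite /SS big_split_diff.
have hB4 : 0 < 4 * B by apply: mulr_gt0.
have [v hv] : exists v, forall e, 0 < e -> exists N : nat, forall k, (N <= k)%N ->
    n (SS (ts k) c - v) < e.
  apply: ipc => e he.
  have [N hN] := archi_inv (divr_gt0 he hB4).
  exists N => k m hk hm.
  rewrite (diff _ _ (uts m) (uts k)).
  apply: le_lt_trans (hn_le2B ipP _ _) _.
  have t1 := tail _ _ (uts m) (uts k).
  have t2 := tail _ _ (uts k) (uts m).
  have a1 : B * (r - \sum_(g <- ts m) sqmod (c g)) <= B * (m.+1%:R)^-1.
    by apply: ler_wpM2l; [exact: ltW|exact: hts'].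
  have a2 : B * (r - \sum_(g <- ts k) sqmod (c g)) <= B * (k.+1%:R)^-1.
    by apply: ler_wpM2l; [exact: ltW|exact: hts'].
  have b1 := mulB_lt (hN m hm).
  have b2 := mulB_lt (hN k hk).
  move: a1 a2 b1 b2; move: (k.+1%:R^-1) (m.+1%:R^-1) => ik im a1 a2 b1 b2; lra.
exists v => e he.
have [N1 hN1] := archi_inv (divr_gt0 he hB4).
have [N2 hN2] := hv (e / 4) (divr_gt0 he (ltr0n _ 4)).
pose k := maxn N1 N2.
exists (ts k) => t ut hsub.
have e1 : SS t c - v = (SS t c - SS (ts k) c) + (SS (ts k) c - v).
  by rewrite addrA subrK.
rewrite e1 (diff _ _ (uts k) ut) (filter_nil_sub hsub) SS_nil subr0.
apply: le_lt_trans (hn_le2 ipP _ _) _.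
have t1 := tail _ _ (uts k) ut.
have a1 : B * (r - \sum_(g <- ts k) sqmod (c g)) <= B * (k.+1%:R)^-1.
  by apply: ler_wpM2l; [exact: ltW|exact: hts'].
have b1 := mulB_lt (hN1 k (leq_maxl _ _)).
have b2 := hN2 k (leq_maxr _ _).
move: a1 b1; move: (k.+1%:R^-1) => ik a1 b1; lra.
Qed.

Lemma hasH_lb c v : hasH c v ->
  (\esum_(g in [set: G]) (sqmod (c g))%:E <= (2 * n v / A)%:E)%E.
Proof.
move=> hv.
have p0 : forall g, 0 <= sqmod (c g) by move=> g; apply: sqmod_ge0.
apply: esum_le_ub => // t ut.
rewrite leNgt; apply/negP => hlt.
set S := \sum_(g <- t) sqmod (c g) in hlt.
have hd : 0 < A * S - 2 * n v.
  by move: hlt; rewrite ltr_pdivrMr // => h; rewrite mulrC; lra.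
have [s0 hs0] := hv _ (divr_gt0 hd (ltr0n _ 2)).
pose t' := t ++ [seq g <- undup s0 | g \notin t].
have ut' : uniq t' by apply: uniq_cat_filter => //; apply: undup_uniq.
have hsub : {subset s0 <= t'}.
  move=> x hx; rewrite mem_cat mem_filter mem_undup hx andbT.
  by case: (x \in t).
have k1 := hs0 t' ut' hsub.
have k2 : A * \sum_(g <- t') sqmod (c g) <= n (SS t' c) by case/andP: (rz c ut').
have k3 : n (SS t' c) <= 2 * n v + 2 * n (SS t' c - v).
  by have := hn_le2 ipP v (SS t' c - v); rewrite addrC subrK.
have k4 : S <= \sum_(g <- t') sqmod (c g).
  rewrite /t' big_cat_filter -/S lerDl; apply: sumr_ge0 => g _; exact: p0.
have k5 : A * S <= A * \sum_(g <- t') sqmod (c g) by apply: ler_wpM2l => //; exact: ltW.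
lra.
Qed.

Variable xi : H.

Lemma SS_pi h z t :
  SS (map (fun g => (h * g)%g) t) (theta ip pi xi (pi h z)) = pi h (SS t (theta ip pi xi z)).
Proof.
rewrite /SS big_map pi_sum; apply: eq_bigr => g _.
rewrite /theta !pi_mul ipZr // pi_ip piZ scalerA; congr (_ *: _).
rewrite conjCK -[RHS]mul1r -(mumu h g); ring.
Qed.

Lemma hasH_pi h z v : hasH (theta ip pi xi z) v ->
  hasH (theta ip pi xi (pi h z)) (pi h v).
Proof.
move=> hv e he; have [s0 hs0] := hv e he.
exists (map (fun g => (h * g)%g) s0) => t ut hsub.
pose t' := map (fun g => (h^-1 * g)%g) t.
have ht : t = map (fun g => (h * g)%g) t'.
  by rewrite /t' -map_comp (eq_map (fun x => mulVKg h x)) map_id.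
have ut' : uniq t' by rewrite /t' (map_inj_uniq (mulgI (h^-1)%g)).
have hsub' : {subset s0 <= t'}.
  move=> x hx; have : (h * x)%g \in t by apply: hsub; apply: map_f.
  by move=> /(map_f (fun g => (h^-1 * g)%g)); rewrite mulKg.
by rewrite ht SS_pi -piB pi_n; apply: hs0.
Qed.

Definition Vs : set H := fun v => exists z, hasH (theta ip pi xi z) v.

Lemma theta_lin a z1 z2 : theta ip pi xi (a *: z1 + z2) =
  (fun g => a * theta ip pi xi z1 g + theta ip pi xi z2 g).
Proof. by apply: funext => g; rewrite /theta (ipDZl ipP). Qed.

Lemma theta0 : theta ip pi xi 0 = (fun _ => 0).
Proof. by apply: funext => g; rewrite /theta (ip0l ipP). Qed.

Lemma Vs0 : Vs 0.
Proof. by exists 0; rewrite theta0; exact: hasH0. Qed.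

Lemma Vslin a v w : Vs v -> Vs w -> Vs (a *: v + w).
Proof.
move=> [z1 h1] [z2 h2]; exists (a *: z1 + z2); rewrite theta_lin.
exact: hasH_lin.
Qed.

Lemma Vs_pi h v : Vs v -> Vs (pi h v).
Proof. by move=> [z hz]; exists (pi h z); exact: hasH_pi. Qed.

Lemma pi1 x : pi 1%g x = mu 1%g 1%g *: x.
Proof. by have [y <-] := pi_surj 1%g x; rewrite muP mulg1. Qed.

Lemma mu_neq0 g h : mu g h != 0.
Proof.
apply/eqP => e; have := mumu g h; rewrite e mulr0 => /eqP.
by rewrite eq_sym oner_eq0.
Qed.

Lemma pi_decomp h u : u = pi h ((mu h (h^-1)%g * mu 1%g 1%g)^-1 *: pi (h^-1)%g u).
Proof.
rewrite piZ muP mulgV pi1 !scalerA mulVf ?scale1r //.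
by apply: mulf_neq0; apply: mu_neq0.
Qed.

Lemma orth_pi h q : orth ip Vs q -> orth ip Vs (pi h q).
Proof.
move=> hq w hw; rewrite (pi_decomp h w) pi_ip; apply: hq.
by apply: (VZ Vs0 Vslin); exact: Vs_pi.
Qed.

Lemma cl_pi h v : cl ip Vs v -> cl ip Vs (pi h v).
Proof.
move=> hv e he; have [w hw h1] := hv e he; exists (pi h w); first exact: Vs_pi.
by rewrite -piB pi_n.
Qed.

Lemma cl_SS t c : (forall g, cl ip Vs (pi g eta)) -> cl ip Vs (SS t c).
Proof.
move=> hg; elim: t => [|g t IH]; first by rewrite SS_nil; exact: (cl_V ipP Vs0).
by rewrite /SS big_cons; apply: (cl_lin ipP Vslin).
Qed.

Lemma sqmod_neg1 (u w : C) : sqmod (u - w) = sqmod (-1 * u + w).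
Proof. have -> : -1 * u + w = - (u - w) by ring. by rewrite sqmodN. Qed.

Lemma main_sec : ~ dense_in_l2 (theta_range ip pi xi) ->
  exists2 x : H, x <> 0 &
    l2_orthogonal (theta_range ip pi x) (theta_range ip pi xi).
Proof.
move=> hnd.
have [pe [hpe hoe]] := proj_ex ipP ipc Vs0 Vslin eta.
exists (eta - pe).
  move=> hx0; apply: hnd.
  have hee : eta = pe by apply/eqP; rewrite -subr_eq0; apply/eqP.
  have hg : forall g, cl ip Vs (pi g eta) by move=> g; rewrite hee; apply: cl_pi.
  move=> b hb e he.
  have [v0 hv0] := hasH_ex hb.
  have hcl : cl ip Vs v0.
    apply: (cl_cl ipP) => ep hep; have [s0 hs0] := hv0 ep hep.
    exists (SS (undup s0) b); first exact: cl_SS.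
    rewrite (hn_sym ipP); apply: hs0; first exact: undup_uniq.
    by move=> x; rewrite mem_undup.
  have hAe : 0 < e * A / 4 by apply: divr_gt0 => //; apply: mulr_gt0.
  have [w [z hz] hw] := hcl _ hAe.
  exists (theta ip pi xi z).
    exists z => //; rewrite /theta_dom.
    by apply: le_lt_trans (hasH_lb hz) _; exact: ltry.
  have hd := hasH_lin (-1) hz hv0.
  have hle := hasH_lb hd.
  rewrite /l2_dist2.
  have -> : \esum_(g in [set: G]) (sqmod (theta ip pi xi z g - b g))%:E =
     \esum_(g in [set: G]) (sqmod (-1 * theta ip pi xi z g + b g))%:E.
    by apply: eq_esum => g _; rewrite sqmod_neg1.
  apply: le_lt_trans hle _; rewrite lte_fin.
  have -> : (-1) *: w + v0 = v0 - w by rewrite scaleN1r addrC.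
  rewrite ltr_pdivrMr //.
  lra.
move=> a bb [y _ ->] [z hz ->].
have [py [hpy hqy]] := proj_ex ipP ipc Vs0 Vslin y.
set qy := y - py in hqy *.
have [wz hwz] := hasH_ex hz.
have hVw : Vs wz by exists z.
have htheta : forall h, theta ip pi (eta - pe) y h = ip qy (pi h eta).
  move=> h; rewrite /theta.
  have ey : y = qy + py by rewrite /qy subrK.
  rewrite {1}ey (ipDl ipP).
  have -> : ip py (pi h (eta - pe)) = 0.
    rewrite (ipC ipP).
    have -> : ip (pi h (eta - pe)) py = 0.
      by apply: (orth_cl ipP) hpy; apply: orth_pi.
    by rewrite rmorph0.
  rewrite addr0 piB (ipBr ipP).
  have -> : ip qy (pi h pe) = 0 by apply: (orth_cl ipP) hqy (cl_pi _ hpe).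
  by rewrite subr0.
move=> e he.
set nq := n qy.
have hnq : 0 <= nq := hn_ge0 ipP qy.
have hep : 0 < e ^+ 2 / (nq + 1) by apply: divr_gt0; [exact: exprn_gt0|lra].
have [s0 hs0] := hwz _ hep.
exists s0 => t ut hsub.
have hsum : \sum_(g <- t) theta ip pi (eta - pe) y g * (theta ip pi xi z g)^* =
    ip qy (SS t (theta ip pi xi z)).
  rewrite /SS (ip_sumr ipP); apply: eq_bigr => g _.
  by rewrite htheta (ipZr ipP) mulrC.
rewrite hsum subr0.
have -> : ip qy (SS t (theta ip pi xi z)) = ip qy (SS t (theta ip pi xi z) - wz).
  by rewrite (ipBr ipP) (hqy _ hVw) subr0.
apply: normc_lt => //.
apply: le_lt_trans (CS ipP _ _) _.
have k1 := hs0 t ut hsub.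
have k2 : nq * n (SS t (theta ip pi xi z) - wz) <= nq * (e ^+ 2 / (nq + 1)).
  by apply: ler_wpM2l => //; apply: ltW.
have E : (nq + 1) * (e ^+ 2 / (nq + 1)) = e ^+ 2 by field; lra.
rewrite -/nq.
lra.
Qed.

End Rep.


Theorem lemma3p9 (R : realType) (H : lmodType R[i]) (ip : H -> H -> R[i])
  (G : groupType) (pi : G -> H -> H) (xi : H) :
  is_hilbert ip ->
  countable_type G ->
  proj_unitary_rep ip pi ->
  bessel_dense ip pi ->
  (exists eta : H, riesz_vector ip pi eta) ->
  ~ dense_in_l2 (theta_range ip pi xi) ->
  exists2 x : H, x <> 0 &
    l2_orthogonal (theta_range ip pi x) (theta_range ip pi xi).
Proof.
move=> [ipP ipc] _ [piU [mu [mu1 muP]]] _ [eta [A [B [hA [hB rz]]]]] hnd.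
exact: (main_sec ipP ipc piU mu1 muP hA hB rz hnd).
Qed.
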